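(* Let $g \ge 2$ and let $\Gamma_g$ be the fundamental group of a closed orientable surface of genus $g$. Let $G$ be a residually nilpotent group with $G/\gamma_k(G) \cong \Gamma_g/\gamma_k(\Gamma_g)$ for all $k \ge 1$. Then no finite-index subgroup of $G$ is free.
   Context: $\gamma_k$ denotes the lower central series: $\gamma_1(G)=G$, $\gamma_k(G)=[G,\gamma_{k-1}(G)]$. A group is residually nilpotent if the intersection of its lower central series is trivial. Such a $G$ is called a ($g$-)parasurface group. *)

(* Defs.v *)
From Stdlib Require Import List Arith.
Import ListNotations.

Record group := Group {
  carrier :> Type;
  gmul : carrier -> carrier -> carrier;
  gone : carrier;
  ginv : carrier -> carrier;
  gmulA : forall x y z, gmul x (gmul y z) = gmul (gmul x y) z;
  gmul1l : forall x, gmul gone x = x;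
  gmulVl : forall x, gmul (ginv x) x = gone
}.

Arguments gmul {g}.
Arguments gone {g}.
Arguments ginv {g}.

Definition comm {G : group} (x y : G) : G :=
  gmul (gmul (ginv x) (ginv y)) (gmul x y).

Inductive gen (G : group) (S : G -> Prop) : G -> Prop :=
| gen_base : forall x, S x -> gen G S x
| gen_one : gen G S gone
| gen_mul : forall x y, gen G S x -> gen G S y -> gen G S (gmul x y)
| gen_inv : forall x, gen G S x -> gen G S (ginv x).

(* lcs G n = gamma_{n+1}(G) *)
Fixpoint lcs (G : group) (n : nat) : G -> Prop :=
  match n with
  | 0 => fun _ => True
  | S m => gen G (fun z => exists x y, lcs G m y /\ z = comm x y)
  end.

Definition gamma (G : group) (k : nat) : G -> Prop := lcs G (k - 1).

Definition residually_nilpotent (G : group) : Prop :=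
  forall x : G, (forall k, 1 <= k -> gamma G k x) -> x = gone.

Definition is_subgroup (G : group) (S : G -> Prop) : Prop :=
  S gone /\ (forall x y, S x -> S y -> S (gmul x y)) /\ (forall x, S x -> S (ginv x)).

Definition finite_index (G : group) (S : G -> Prop) : Prop :=
  is_subgroup G S /\
  exists l : list G, forall x : G, exists t, In t l /\ S (gmul (ginv t) x).

Definition hom_on {G K : group} (S : G -> Prop) (f : G -> K) : Prop :=
  forall x y, S x -> S y -> f (gmul x y) = gmul (f x) (f y).

Definition is_free_subgroup (G : group) (S : G -> Prop) : Prop :=
  exists B : G -> Prop,
    (forall b, B b -> S b) /\
    forall (K : group) (f : G -> K),
      exists phi : G -> K,
        hom_on S phi /\ (forall b, B b -> phi b = f b) /\
        (forall psi : G -> K, hom_on S psi -> (forall b, B b -> psi b = f b) ->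
            forall x, S x -> psi x = phi x).

(* G/N ≅ H/M (N, M normal), expressed via a lift phi : G -> H of the isomorphism:
   phi induces a homomorphism G -> H/M which is surjective with kernel N. *)
Definition quot_iso (G H : group) (N : G -> Prop) (M : H -> Prop) : Prop :=
  exists phi : G -> H,
    (forall x y, M (gmul (ginv (gmul (phi x) (phi y))) (phi (gmul x y)))) /\
    (forall x, N x <-> M (phi x)) /\
    (forall y : H, exists x, M (gmul (ginv (phi x)) y)).

Fixpoint prod_comm {G : group} (a b : nat -> G) (n : nat) : G :=
  match n with
  | 0 => gone
  | S m => gmul (prod_comm a b m) (comm (a m) (b m))
  end.

(* Gam with elements a_i, b_i (i < g) is presented by
   < a_1,b_1,...,a_g,b_g | prod [a_i,b_i] > : universal property of the presentation. *)
Definition is_surface_group (g : nat) (Gam : group) (a b : nat -> Gam) : Prop :=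
  prod_comm a b g = gone /\
  forall (K : group) (a' b' : nat -> K), prod_comm a' b' g = gone ->
    exists phi : Gam -> K,
      hom_on (fun _ => True) phi /\
      (forall i, i < g -> phi (a i) = a' i /\ phi (b i) = b' i) /\
      (forall psi : Gam -> K, hom_on (fun _ => True) psi ->
         (forall i, i < g -> psi (a i) = a' i /\ psi (b i) = b' i) ->
         forall x, psi x = phi x).

(* Main.v *)
Require Import Defs.
From Stdlib Require Import Arith ZArith Lia List Permutation Classical ClassicalEpsilon.
Import ListNotations.

Lemma mulA {G:group} (x y z:G): gmul x (gmul y z) = gmul (gmul x y) z. Proof. apply gmulA. Qed.
Lemma mul1l {G:group} (x:G): gmul gone x = x. Proof. apply gmul1l. Qed.
Lemma mulVl {G:group} (x:G): gmul (ginv x) x = gone. Proof. apply gmulVl. Qed.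
Lemma mulKl {G:group} (x y:G): gmul (ginv x) (gmul x y) = y.
Proof. rewrite mulA, mulVl, mul1l. reflexivity. Qed.
Lemma mulVr {G:group} (x:G): gmul x (ginv x) = gone.
Proof.
  transitivity (gmul (gmul (ginv (ginv x)) (ginv x)) (gmul x (ginv x))).
  - rewrite mulVl, mul1l. reflexivity.
  - rewrite <- mulA, (mulKl x), mulVl. reflexivity.
Qed.
Lemma mul1r {G:group} (x:G): gmul x gone = x.
Proof. rewrite <- (mulVl x), mulA, mulVr, mul1l. reflexivity. Qed.
Lemma mulKr {G:group} (x y:G): gmul x (gmul (ginv x) y) = y.
Proof. rewrite mulA, mulVr, mul1l. reflexivity. Qed.
Lemma mulVKr {G:group} (x y:G): gmul (gmul x (ginv y)) y = x.
Proof. rewrite <- mulA, mulVl, mul1r. reflexivity. Qed.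
Lemma mulKVr {G:group} (x y:G): gmul (gmul x y) (ginv y) = x.
Proof. rewrite <- mulA, mulVr, mul1r. reflexivity. Qed.
Lemma inv_uniq {G:group} (x y:G): gmul x y = gone -> y = ginv x.
Proof. intro H. rewrite <- (mulKl x y), H, mul1r. reflexivity. Qed.
Lemma invK {G:group} (x:G): ginv (ginv x) = x.
Proof. symmetry. apply inv_uniq. apply mulVl. Qed.
Lemma invM {G:group} (x y:G): ginv (gmul x y) = gmul (ginv y) (ginv x).
Proof. symmetry. apply inv_uniq. rewrite mulA, mulKVr, mulVr. reflexivity. Qed.
Lemma inv1 {G:group}: ginv (@gone G) = gone.
Proof. symmetry. apply inv_uniq. apply mul1l. Qed.

Ltac gsimp := repeat progress (rewrite ?invM, ?invK, ?inv1, ?mul1l, ?mul1r, ?mulA, ?mulVl, ?mulVr, ?mulVKr, ?mulKVr).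

Lemma hom_one (G K:group) (f:G->K): hom_on (fun _ => True) f -> f gone = gone.
Proof.
  intro H. assert (E: f gone = gmul (f gone) (f gone)) by (rewrite <- H; auto; now rewrite mul1l).
  rewrite <- (mulKl (f gone) (f gone)). rewrite <- E. apply mulVl.
Qed.
Lemma hom_inv (G K:group) (f:G->K) x: hom_on (fun _ => True) f -> f (ginv x) = ginv (f x).
Proof.
  intro H. apply inv_uniq. rewrite <- H by auto. rewrite mulVr. apply hom_one; auto.
Qed.

Definition Zg : group.
Proof.
  refine (Group Z Z.add 0%Z Z.opp _ _ _); intros; lia.
Defined.

Definition H3mul (x y : Z * Z * Z) : Z * Z * Z :=
  match x, y with (p,q,s), (p',q',s') => (p+p', q+q', s+s'+p*q')%Z end.
Definition H3inv (x : Z*Z*Z) : Z*Z*Z :=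
  match x with (p,q,s) => (-p, -q, -s + p*q)%Z end.
Definition H3 : group.
Proof.
  refine (Group (Z*Z*Z) H3mul (0,0,0)%Z H3inv _ _ _).
  - intros [[p q] s] [[p' q'] s'] [[p'' q''] s'']; simpl. rewrite ?pair_equal_spec; repeat split; ring.
  - intros [[p q] s]; simpl. rewrite ?pair_equal_spec; repeat split; ring.
  - intros [[p q] s]; simpl. rewrite ?pair_equal_spec; repeat split; ring.
Defined.

Lemma H3comm (p q s p' q' s' : Z) :
  @comm H3 (p,q,s) (p',q',s') = (0, 0, p*q' - p'*q)%Z.
Proof. simpl. rewrite ?pair_equal_spec; repeat split; ring. Qed.
Ltac gsimp_in H := repeat progress (rewrite ?invM, ?invK, ?inv1, ?mul1l, ?mul1r, ?mulA, ?mulVl, ?mulVr, ?mulVKr, ?mulKVr in H).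

Definition conjg {G:group} (z a : G) : G := gmul (gmul (ginv z) a) z.

Lemma conj_mul {G:group} (z a b : G) : conjg z (gmul a b) = gmul (conjg z a) (conjg z b).
Proof. unfold conjg. gsimp. reflexivity. Qed.
Lemma conj_inv {G:group} (z a : G) : conjg z (ginv a) = ginv (conjg z a).
Proof. unfold conjg. gsimp. reflexivity. Qed.
Lemma conj_one {G:group} (z : G) : conjg z gone = gone.
Proof. unfold conjg. gsimp. reflexivity. Qed.
Lemma conj_comm {G:group} (z x y : G) : conjg z (comm x y) = comm (conjg z x) (conjg z y).
Proof. unfold comm. rewrite !conj_mul, !conj_inv. reflexivity. Qed.

Lemma gen_conj {G:group} (S : G -> Prop) (z x : G) :
  (forall s, S s -> gen G S (conjg z s)) -> gen G S x -> gen G S (conjg z x).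
Proof.
  intros HS Hx. induction Hx.
  - apply HS; assumption.
  - rewrite conj_one. apply gen_one.
  - rewrite conj_mul. now apply gen_mul.
  - rewrite conj_inv. now apply gen_inv.
Qed.

Lemma lcs_normal {G:group} (m : nat) : forall (z x : G), lcs G m x -> lcs G m (conjg z x).
Proof.
  induction m; simpl; auto.
  intros z x Hx. apply gen_conj; auto.
  intros s [a [b [Hb ->]]]. apply gen_base. exists (conjg z a), (conjg z b).
  split; auto. apply conj_comm.
Qed.

Lemma lcs_sub {G:group} (m : nat) : is_subgroup G (lcs G m).
Proof.
  destruct m; simpl.
  - repeat split; auto.
  - split; [apply gen_one|split]; intros; [now apply gen_mul|now apply gen_inv].
Qed.

Definition cg {G:group} (M : G -> Prop) (x y : G) := M (gmul (ginv x) y).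

Lemma cg_refl {G:group} M (x:G) : is_subgroup G M -> cg M x x.
Proof. intros [H1 _]. unfold cg. now rewrite mulVl. Qed.
Lemma cg_sym {G:group} M (x y:G) : is_subgroup G M -> cg M x y -> cg M y x.
Proof. intros [_ [_ Hi]] H. unfold cg in *. apply Hi in H. rewrite invM, invK in H. exact H. Qed.
Lemma cg_trans {G:group} M (x y z:G) : is_subgroup G M -> cg M x y -> cg M y z -> cg M x z.
Proof.
  intros [_ [Hm _]] H1 H2. unfold cg in *. pose proof (Hm _ _ H1 H2) as H.
  rewrite mulA, mulKVr in H. exact H.
Qed.
Lemma cg_mul {G:group} M (x x' y y':G) : is_subgroup G M ->
  (forall z m, M m -> M (conjg z m)) ->
  cg M x x' -> cg M y y' -> cg M (gmul x y) (gmul x' y').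
Proof.
  intros [_ [Hm _]] HN H1 H2. unfold cg in *.
  pose proof (Hm _ _ (HN y _ H1) H2) as H. unfold conjg in H. gsimp_in H. gsimp. exact H.
Qed.
Lemma cg_inv {G:group} M (x x':G) : is_subgroup G M ->
  (forall z m, M m -> M (conjg z m)) ->
  cg M x x' -> cg M (ginv x) (ginv x').
Proof.
  intros [_ [_ Hi]] HN H1. unfold cg in *.
  pose proof (HN (ginv x) _ (Hi _ H1)) as H. unfold conjg in H. gsimp_in H. gsimp. exact H.
Qed.
Open Scope Z_scope.

Fixpoint sumZ (l : list Z) : Z := match l with [] => 0 | a :: l' => a + sumZ l' end.

Lemma sum_lin {A} (l: list A) (F1 F2 F3 : A -> Z) (K : Z) :
  sumZ (map (fun t => F1 t + K + F2 t + F3 t) l) =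
  sumZ (map F1 l) + Z.of_nat (length l) * K + sumZ (map F2 l) + sumZ (map F3 l).
Proof. induction l; cbn [map sumZ length]; [simpl; ring|]. rewrite IHl, Nat2Z.inj_succ. ring. Qed.
Lemma sum_sub {A} (l: list A) (F G : A -> Z) (c : Z) :
  sumZ (map (fun t => F t - c * G t) l) = sumZ (map F l) - c * sumZ (map G l).
Proof. induction l; simpl; [ring|]. rewrite IHl. ring. Qed.
Lemma sum_scal {A} (l: list A) (G : A -> Z) (c : Z) :
  sumZ (map (fun t => c * G t) l) = c * sumZ (map G l).
Proof. induction l; simpl; [ring|]. rewrite IHl. ring. Qed.
Lemma sum_perm (l l' : list Z) : Permutation l l' -> sumZ l = sumZ l'.
Proof. induction 1; simpl; lia. Qed.
Lemma sum_ext {A} (l: list A) (F G : A -> Z) : (forall t, In t l -> F t = G t) ->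
  sumZ (map F l) = sumZ (map G l).
Proof. intro H. f_equal. apply map_ext_in. auto. Qed.

Lemma coset_trans {G:group} (S : G -> Prop) (a b c : G) : is_subgroup G S ->
  S (gmul (ginv a) b) -> S (gmul (ginv b) c) -> S (gmul (ginv a) c).
Proof.
  intros [_ [Hm _]] H1 H2. pose proof (Hm _ _ H1 H2) as H. rewrite mulA, mulKVr in H. exact H.
Qed.
Lemma coset_sym {G:group} (S : G -> Prop) (a b : G) : is_subgroup G S ->
  S (gmul (ginv a) b) -> S (gmul (ginv b) a).
Proof. intros [_ [_ Hi]] H. apply Hi in H. rewrite invM, invK in H. exact H. Qed.

Lemma transversal_exists {G:group} (S : G -> Prop) (HS : is_subgroup G S) (l : list G) :
  exists T, NoDup T /\
    (forall t1 t2, In t1 T -> In t2 T -> S (gmul (ginv t1) t2) -> t1 = t2) /\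
    (forall x, (exists t, In t l /\ S (gmul (ginv t) x)) -> exists t, In t T /\ S (gmul (ginv t) x)).
Proof.
  induction l as [|a l IH].
  - exists []. split; [constructor|split]; [intros t1 t2 []| intros x [t [[] _]]].
  - destruct IH as [T [HN [HD HC]]].
    destruct (classic (exists t', In t' T /\ S (gmul (ginv t') a))) as [[t' [Ht' Hs']]|Hno].
    + exists T. split; [exact HN|split; [exact HD|]].
      intros x [t [[Ht|Ht] Hx]].
      * subst t. exists t'. split; auto. eapply coset_trans; eauto.
      * apply HC. eauto.
    + exists (a :: T). split; [|split].
      * constructor; auto. intro Ha. apply Hno. exists a. split; auto.
        rewrite mulVl. apply HS.
      * intros t1 t2 [<-|H1] [<-|H2] H; auto.
        -- exfalso. apply Hno. exists t2. split; auto. now apply coset_sym.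
        -- exfalso. apply Hno. exists t1. split; auto.
      * intros x [t [[Ht|Ht] Hx]].
        -- subst t. exists a. split; simpl; auto.
        -- destruct (HC x) as [t' [Ht' Hx']]; eauto. exists t'. simpl; auto.
Qed.
Open Scope Z_scope.

Lemma zhom_one {G:group} (u : G -> Z) : (forall x y, u (gmul x y) = u x + u y) -> u gone = 0.
Proof. intro Hu. specialize (Hu gone gone). rewrite mul1l in Hu. lia. Qed.
Lemma zhom_inv {G:group} (u : G -> Z) x : (forall x y, u (gmul x y) = u x + u y) -> u (ginv x) = - u x.
Proof. intro Hu. pose proof (Hu (ginv x) x) as H. rewrite mulVl, zhom_one in H; auto. lia. Qed.

Lemma transfer {G:group} (S : G -> Prop) (HS : is_subgroup G S) (T : list G) (HN : NoDup T)
  (HD : forall t1 t2, In t1 T -> In t2 T -> S (gmul (ginv t1) t2) -> t1 = t2)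
  (HC : forall x, exists t, In t T /\ S (gmul (ginv t) x))
  (u v h : G -> Z)
  (Hu : forall x y, u (gmul x y) = u x + u y)
  (Hv : forall x y, v (gmul x y) = v x + v y)
  (Hh : forall a b, S a -> S b -> h (gmul a b) = h a + h b + u a * v b) :
  exists D : G -> Z, forall x y, D (gmul x y) = D x + D y + Z.of_nat (length T) * u x * v y.
Proof.
  destruct HS as [S1 [Sm Si]] eqn:EHS.
  set (rep := fun x => proj1_sig (constructive_indefinite_description _ (HC x))).
  assert (Hrep : forall x, In (rep x) T /\ S (gmul (ginv (rep x)) x)).
  { intro x. unfold rep. destruct (constructive_indefinite_description _ (HC x)); simpl; auto. }
  assert (Huniq : forall t x, In t T -> S (gmul (ginv t) x) -> t = rep x).
  { intros t x Ht Hx. destruct (Hrep x) as [Hr Hrx]. apply HD; auto.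
    eapply coset_trans; [exact HS|exact Hx|]. now apply coset_sym. }
  clearbody rep.
  set (P := fun g => h (gmul (ginv (rep g)) g) + u (rep g) * v (gmul (ginv (rep g)) g)).
  assert (HP : forall g s, S s -> P (gmul g s) = P g + h s + u g * v s).
  { intros g s Hs. unfold P.
    assert (E : rep (gmul g s) = rep g).
    { symmetry. apply Huniq; [apply Hrep|]. rewrite mulA. apply Sm; auto. apply Hrep. }
    rewrite E, mulA, Hh, Hv; auto; [|apply Hrep].
    assert (Eu : u (gmul (ginv (rep g)) g) = - u (rep g) + u g).
    { rewrite Hu, zhom_inv; auto. }
    rewrite Eu. ring. }
  exists (fun x => sumZ (map (fun t => P (gmul x t) - P t) T)).
  intros x y.
  set (rho := fun t => rep (gmul y t)).
  assert (Hper : Permutation (map rho T) T).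
  { apply NoDup_Permutation_bis.
    - apply NoDup_map_NoDup_ForallPairs; auto.
      intros t1 t2 H1 H2 E. apply HD; auto. unfold rho in E.
      assert (Hc : S (gmul (ginv (gmul y t1)) (gmul y t2))).
      { eapply coset_trans; [exact HS| |].
        - apply coset_sym; [exact HS|]. apply Hrep.
        - rewrite E. apply Hrep. }
      rewrite invM, <- mulA, (mulA (ginv y) y t2), mulVl, mul1l in Hc. exact Hc.
    - rewrite length_map. lia.
    - intros z Hz. apply in_map_iff in Hz. destruct Hz as [t [<- _]]. apply Hrep. }
  assert (Ht : forall t, P (gmul (gmul x y) t) - P t =
     ((P (gmul x (rho t)) - P (rho t)) - u x * v (rho t)) + u x * v y + u x * v t
     + (P (gmul y t) - P t)).
  { intro t. set (s := gmul (ginv (rho t)) (gmul y t)).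
    assert (Hs : S s) by apply Hrep.
    assert (E1 : gmul y t = gmul (rho t) s) by (unfold s; rewrite mulKr; reflexivity).
    assert (E2 : gmul (gmul x y) t = gmul (gmul x (rho t)) s)
      by (rewrite <- mulA, E1, mulA; reflexivity).
    rewrite E2, E1, !HP by exact Hs.
    assert (Evs : v s = - v (rho t) + v y + v t).
    { unfold s. rewrite Hv, Hv, zhom_inv by auto. ring. }
    rewrite (HP (rho t) s Hs), Evs, Hu. ring. }
  rewrite (sum_ext _ _ _ (fun t _ => Ht t)).
  rewrite sum_lin.
  rewrite (sum_sub T (fun t => P (gmul x (rho t)) - P (rho t)) (fun t => v (rho t))).
  rewrite (sum_scal T v (u x)).
  rewrite <- (map_map rho (fun z => P (gmul x z) - P z)).
  rewrite <- (map_map rho v).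
  rewrite (sum_perm _ _ (Permutation_map (fun z => P (gmul x z) - P z) Hper)).
  rewrite (sum_perm _ _ (Permutation_map v Hper)).
  ring.
Qed.

Lemma prod_comm_Zg (a b : nat -> Zg) n : prod_comm a b n = (0%Z : Zg).
Proof. induction n; simpl; auto. rewrite IHn. lia. Qed.

Lemma Zkill {K:group} (U : K -> Zg) : hom_on (fun _ => True) U ->
  forall m x, lcs K (S m) x -> U x = 0%Z.
Proof.
  intros HU m x Hx. simpl in Hx. induction Hx.
  - destruct H as [a [b [_ ->]]]. unfold comm. rewrite !HU by auto.
    rewrite !(hom_inv _ _ U) by auto. simpl. lia.
  - apply (hom_one _ _ U HU).
  - rewrite HU by auto. rewrite IHHx1, IHHx2. reflexivity.
  - rewrite (hom_inv _ _ U) by auto. rewrite IHHx. reflexivity.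
Qed.

Lemma hom_comm {G K:group} (F : G -> K) x y : hom_on (fun _ => True) F ->
  F (comm x y) = comm (F x) (F y).
Proof. intro HF. unfold comm. rewrite !HF by auto. rewrite !(hom_inv _ _ F) by auto. reflexivity. Qed.

Lemma H3_lcs1 {G:group} (F : G -> H3) : hom_on (fun _ => True) F ->
  forall x, lcs G 1 x -> exists s, F x = (0, 0, s)%Z.
Proof.
  intros HF x Hx. simpl in Hx. induction Hx.
  - destruct H as [a [b [_ ->]]]. rewrite hom_comm by auto.
    destruct (F a) as [[p q] s]. destruct (F b) as [[p' q'] s']. rewrite H3comm. eauto.
  - exists 0%Z. apply (hom_one _ _ F HF).
  - rewrite HF by auto. destruct IHHx1 as [s1 ->]. destruct IHHx2 as [s2 ->].
    exists (s1 + s2 + 0 * 0)%Z. reflexivity.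
  - rewrite (hom_inv _ _ F) by auto. destruct IHHx as [s1 ->].
    exists (- s1 + 0 * 0)%Z. reflexivity.
Qed.

Lemma H3_lcs2 {G:group} (F : G -> H3) : hom_on (fun _ => True) F ->
  forall x, lcs G 2 x -> F x = (0, 0, 0)%Z.
Proof.
  intros HF x Hx. change (gen G (fun z => exists x y, lcs G 1 y /\ z = comm x y) x) in Hx.
  induction Hx.
  - destruct H as [a [b [Hb ->]]]. rewrite hom_comm by auto.
    destruct (H3_lcs1 F HF b Hb) as [s' ->].
    destruct (F a) as [[p q] s]. rewrite H3comm. f_equal. f_equal. ring.
  - apply (hom_one _ _ F HF).
  - rewrite HF by auto. rewrite IHHx1, IHHx2. reflexivity.
  - rewrite (hom_inv _ _ F) by auto. rewrite IHHx. reflexivity.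
Qed.

Lemma phi_cong {G K:group} (M : K -> Prop) (phi : G -> K) :
  is_subgroup K M -> (forall z m, M m -> M (conjg z m)) ->
  (forall x y, M (gmul (ginv (gmul (phi x) (phi y))) (phi (gmul x y)))) ->
  (cg M (phi gone) gone) /\
  (forall x, cg M (phi (ginv x)) (ginv (phi x))) /\
  (forall x y, cg M (phi (comm x y)) (comm (phi x) (phi y))).
Proof.
  intros HM HN Hmul.
  assert (Hm : forall x y, cg M (phi (gmul x y)) (gmul (phi x) (phi y))).
  { intros. apply cg_sym; auto. apply Hmul. }
  assert (H1 : cg M (phi gone) gone).
  { pose proof (cg_mul M (ginv (phi gone)) (ginv (phi gone)) _ _ HM HN (cg_refl M _ HM) (Hm gone gone)) as H.
    rewrite mul1l, mulKl, mulVl in H. apply cg_sym; auto. }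
  assert (Hi : forall x, cg M (phi (ginv x)) (ginv (phi x))).
  { intro x.
    assert (H : cg M (gmul (phi (ginv x)) (phi x)) gone).
    { eapply cg_trans; [exact HM| |exact H1]. apply cg_sym; auto. rewrite <- (mulVl x). apply Hm. }
    pose proof (cg_mul M _ _ (ginv (phi x)) (ginv (phi x)) HM HN H (cg_refl M _ HM)) as H'.
    rewrite mulKVr, mul1l in H'. exact H'. }
  split; [exact H1|split; [exact Hi|]].
  intros x y. unfold comm.
  eapply cg_trans; [exact HM|apply Hm|].
  apply cg_mul; auto.
  - eapply cg_trans; [exact HM|apply Hm|]. apply cg_mul; auto.
Qed.

Lemma prod_cong {K:group} (M : K -> Prop) (p q p' q' : nat -> K) n :
  is_subgroup K M -> (forall z m, M m -> M (conjg z m)) ->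
  (forall i, cg M (p i) (p' i)) -> (forall i, cg M (q i) (q' i)) ->
  cg M (prod_comm p q n) (prod_comm p' q' n).
Proof.
  intros HM HN Hp Hq. induction n; simpl.
  - apply cg_refl; auto.
  - unfold comm. repeat apply cg_mul; auto; apply cg_inv; auto.
Qed.

Lemma phi_prod {G K:group} (M : K -> Prop) (phi : G -> K) (p q : nat -> G) n :
  is_subgroup K M -> (forall z m, M m -> M (conjg z m)) ->
  (forall x y, M (gmul (ginv (gmul (phi x) (phi y))) (phi (gmul x y)))) ->
  cg M (phi (prod_comm p q n)) (prod_comm (fun i => phi (p i)) (fun i => phi (q i)) n).
Proof.
  intros HM HN Hmul. destruct (phi_cong M phi HM HN Hmul) as [H1 [Hi Hc]].
  induction n; simpl.
  - exact H1.
  - eapply cg_trans; [exact HM| apply cg_sym; [exact HM|apply Hmul]|].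
    apply cg_mul; auto.
Qed.
Close Scope Z_scope.

Theorem theorem8 :
  forall (g : nat), 2 <= g ->
  forall (Gam : group) (a b : nat -> Gam), is_surface_group g Gam a b ->
  forall (G : group), residually_nilpotent G ->
  (forall k, 1 <= k -> quot_iso G Gam (gamma G k) (gamma Gam k)) ->
  forall S : G -> Prop, finite_index G S -> ~ is_free_subgroup G S.
Proof.
  intros g Hg Gam a b [Hrel Huniv] G _ Hiso S [HS [l Hl]] [B [HB Hfree]].
  destruct (Hiso 3 ltac:(lia)) as [phi [Hmul [Hker Hsurj]]].
  change (gamma Gam 3) with (lcs Gam 2) in *.
  change (gamma G 3) with (lcs G 2) in *.
  set (M := lcs Gam 2) in *.
  assert (HM : is_subgroup Gam M) by apply lcs_sub.
  assert (HN : forall z m, M m -> M (conjg z m)) by (intros; now apply lcs_normal).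
  set (da := fun i : nat => (if Nat.eqb i 0 then 1 else 0)%Z : Zg).
  set (z0 := fun i : nat => 0%Z : Zg).
  destruct (Huniv Zg da z0 (prod_comm_Zg _ _ _)) as [U [HU [HUab _]]].
  destruct (Huniv Zg z0 da (prod_comm_Zg _ _ _)) as [V [HV [HVab _]]].
  assert (Ucg : forall p q, cg M p q -> U q = U p).
  { intros p q Hpq. rewrite <- (mulKr p q). rewrite HU by auto.
    rewrite (Zkill U HU 1 _ Hpq). simpl. lia. }
  assert (Vcg : forall p q, cg M p q -> V q = V p).
  { intros p q Hpq. rewrite <- (mulKr p q). rewrite HV by auto.
    rewrite (Zkill V HV 1 _ Hpq). simpl. lia. }
  set (u := fun x => U (phi x) : Z).
  set (v := fun x => V (phi x) : Z).
  assert (Hu : forall x y, u (gmul x y) = (u x + u y)%Z).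
  { intros x y. unfold u. rewrite (Ucg _ _ (Hmul x y)). rewrite HU by auto. reflexivity. }
  assert (Hv : forall x y, v (gmul x y) = (v x + v y)%Z).
  { intros x y. unfold v. rewrite (Vcg _ _ (Hmul x y)). rewrite HV by auto. reflexivity. }
  set (xs := fun i => proj1_sig (constructive_indefinite_description _ (Hsurj (a i)))).
  set (ys := fun i => proj1_sig (constructive_indefinite_description _ (Hsurj (b i)))).
  assert (Hxs : forall i, cg M (phi (xs i)) (a i)).
  { intro i. unfold xs. destruct (constructive_indefinite_description _ (Hsurj (a i))); simpl; auto. }
  assert (Hys : forall i, cg M (phi (ys i)) (b i)).
  { intro i. unfold ys. destruct (constructive_indefinite_description _ (Hsurj (b i))); simpl; auto. }
  set (r := prod_comm xs ys g).
  assert (Hr : lcs G 2 r).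
  { apply Hker.
    assert (H : cg M (phi r) gone).
    { eapply cg_trans; [exact HM|apply phi_prod; auto|].
      rewrite <- Hrel. apply prod_cong; auto. }
    unfold cg in H. rewrite mul1r in H. destruct HM as [_ [_ Hi]]. apply Hi in H.
    rewrite invK in H. exact H. }
  assert (HuS : hom_on S (u : G -> Zg)) by (intros x y _ _; apply Hu).
  assert (HvS : hom_on S (v : G -> Zg)) by (intros x y _ _; apply Hv).
  destruct (Hfree H3 (fun x => (u x, v x, 0%Z))) as [Phs [HPh [HPhB _]]].
  destruct (Hfree Zg u) as [fu [_ [_ Hfu]]].
  destruct (Hfree Zg v) as [fv [_ [_ Hfv]]].
  assert (E1 : forall x, S x -> fst (fst (Phs x)) = u x).
  { intros x Hx. rewrite (Hfu (fun x => fst (fst (Phs x)) : Zg)), (Hfu u); auto.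
    - intros y z Hy Hz. simpl. rewrite HPh by auto.
      destruct (Phs y) as [[? ?] ?], (Phs z) as [[? ?] ?]. reflexivity.
    - intros c Hc. rewrite HPhB by auto. reflexivity. }
  assert (E2 : forall x, S x -> snd (fst (Phs x)) = v x).
  { intros x Hx. rewrite (Hfv (fun x => snd (fst (Phs x)) : Zg)), (Hfv v); auto.
    - intros y z Hy Hz. simpl. rewrite HPh by auto.
      destruct (Phs y) as [[? ?] ?], (Phs z) as [[? ?] ?]. reflexivity.
    - intros c Hc. rewrite HPhB by auto. reflexivity. }
  set (h := fun x => snd (Phs x)).
  assert (Hh : forall x y, S x -> S y -> h (gmul x y) = (h x + h y + u x * v y)%Z).
  { intros x y Hx Hy. unfold h. rewrite HPh by auto. rewrite <- (E1 x Hx), <- (E2 y Hy).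
    destruct (Phs x) as [[? ?] ?], (Phs y) as [[? ?] ?]. reflexivity. }
  destruct (transversal_exists S HS l) as [T [HTN [HTD HTC]]].
  assert (HC : forall x, exists t, In t T /\ S (gmul (ginv t) x)) by (intro x; apply HTC, Hl).
  destruct (transfer S HS T HTN HTD HC u v h Hu Hv Hh) as [D HD].
  set (n := Z.of_nat (length T)).
  assert (Hn : (1 <= n)%Z).
  { destruct (HC gone) as [t [Ht _]]. unfold n. destruct T; [destruct Ht|]. simpl length. lia. }
  set (F := fun x => ((n * u x)%Z, v x, D x) : H3).
  assert (HF : hom_on (fun _ => True) F).
  { intros x y _ _. unfold F. simpl. rewrite Hu, Hv, HD.
    rewrite !pair_equal_spec. repeat split; ring. }
  assert (Hval : forall m, m <= g ->
    F (prod_comm xs ys m) = (0, 0, if Nat.eqb m 0 then 0 else n)%Z).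
  { induction m; intro Hm.
    - simpl. apply (hom_one _ _ F HF).
    - simpl prod_comm. rewrite HF by auto. rewrite IHm by lia.
      rewrite hom_comm by auto.
      assert (Ux : u (xs m) = da m) by (unfold u; rewrite <- (Ucg _ _ (Hxs m)); exact (proj1 (HUab m ltac:(lia)))).
      assert (Uy : u (ys m) = 0%Z) by (unfold u; rewrite <- (Ucg _ _ (Hys m)); exact (proj2 (HUab m ltac:(lia)))).
      assert (Vx : v (xs m) = 0%Z) by (unfold v; rewrite <- (Vcg _ _ (Hxs m)); exact (proj1 (HVab m ltac:(lia)))).
      assert (Vy : v (ys m) = da m) by (unfold v; rewrite <- (Vcg _ _ (Hys m)); exact (proj2 (HVab m ltac:(lia)))).
      unfold F. rewrite Ux, Uy, Vx, Vy, H3comm. unfold da.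
      destruct m; simpl; rewrite !pair_equal_spec; repeat split; ring. }
  pose proof (H3_lcs2 F HF r Hr) as H0.
  unfold r in H0. rewrite (Hval g ltac:(lia)) in H0.
  destruct g; [lia|]. simpl in H0. injection H0. lia.
Qed.
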